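(* Let $G=(V,E)$ be a graph with $n$ vertices and $J$ nonnegative interaction strengths, and suppose the Glauber dynamics for the Ising model on $G$ satisfies $\mathtt{gap}^{-1}\le n\log n$. Then there exists a subset $F\subset V$ of size $\lfloor\sqrt n/\log n\rfloor$ such that $$\sum_{u,v\in F,\,u\neq v}\mathrm{Cov}_\mu(\sigma(u),\sigma(v))\le\frac{2}{\log n}.$$
   Context: The Ising measure on $\{\pm1\}^V$ is $\mu(\sigma)=Z^{-1}\exp(\sum_{uv\in E}J_{uv}\sigma(u)\sigma(v))$ with $J_{uv}\ge0$. Glauber dynamics: at each step pick a uniform vertex $v$ and resample $\sigma(v)$ from its conditional law under $\mu$ given all other spins. $\mathtt{gap}=1-\lambda$, where $\lambda$ is the second largest eigenvalue of the transition kernel of this chain. *)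

(* Defs.v *)
From HB Require Import structures.
From mathcomp Require Import all_boot all_order all_algebra.
From mathcomp Require Import all_classical all_reals all_analysis.
Set Implicit Arguments. Unset Strict Implicit. Unset Printing Implicit Defensive.
Import Order.TTheory GRing.Theory Num.Theory.
Local Open Scope ring_scope.

(* Spin configurations on V = 'I_n : true <-> +1, false <-> -1. *)
Definition spins (n : nat) := {ffun 'I_n -> bool}.

Definition spin {R : realType} (b : bool) : R := if b then 1 else -1.

Section Ising.
Variables (R : realType) (n : nat).
Variables (E : rel 'I_n) (J : 'I_n -> 'I_n -> R).

Definition ising_energy (s : spins n) : R :=
  \sum_(u : 'I_n) \sum_(v : 'I_n | (u < v)%N && E u v)
     J u v * spin (s u) * spin (s v).

Definition ising_weight (s : spins n) : R := expR (ising_energy s).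
Definition ising_Z : R := \sum_(s : spins n) ising_weight s.
Definition ising_mu (s : spins n) : R := ising_weight s / ising_Z.

Definition ising_E (f : spins n -> R) : R := \sum_(s : spins n) ising_mu s * f s.

Definition ising_cov (u v : 'I_n) : R :=
  ising_E (fun s => spin (s u) * spin (s v))
  - ising_E (fun s => spin (s u)) * ising_E (fun s => spin (s v)).

Definition upd (s : spins n) (v : 'I_n) (b : bool) : spins n :=
  [ffun w => if w == v then b else s w].

(* Glauber transition kernel: pick v uniformly, resample s(v) from its
   conditional law under mu given the other spins. *)
Definition glauber (s t : spins n) : R :=
  n%:R^-1 * \sum_(v : 'I_n)
    (if [forall w, (w != v) ==> (s w == t w)]
     then ising_mu t / (ising_mu (upd s v true) + ising_mu (upd s v false))
     else 0).

Definition glauber_mx : 'M[R]_#|{: spins n}| :=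
  \matrix_(i, j) glauber (enum_val i) (enum_val j).
End Ising.

(* s is the list of eigenvalues of A, with multiplicity, in non-increasing
   order (all real). *)
Definition is_spectrum (R : realType) (m : nat) (A : 'M[R]_m) (s : seq R) :=
  sorted (fun x y : R => y <= x) s /\ char_poly A = \prod_(a <- s) ('X - a%:P).

(* spectral gap given the ordered spectrum: 1 - lambda_2 *)
Definition gap_of (R : realType) (s : seq R) : R := 1 - s`_1.

(* Main.v *)
Require Import Defs.
From HB Require Import structures.
From mathcomp Require Import all_boot all_order all_algebra.
From mathcomp Require Import all_classical all_reals all_analysis.
From mathcomp Require Import ring lra complex spectral sesquilinear.
Import Order.TTheory GRing.Theory Num.Theory.
Local Open Scope ring_scope.

Module PartG.

Section Greedy.
Variables (R : realFieldType) (n : nat) (c : 'I_n -> 'I_n -> R).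
Hypothesis csym : forall u v, c u v = c v u.

Definition Ssum (F : {set 'I_n}) := \sum_(u in F) \sum_(v in F | u != v) c u v.
Definition rw (F : {set 'I_n}) w := \sum_(v in F | w != v) c w v.

Lemma S_remove (F : {set 'I_n}) w : w \in F -> Ssum (F :\ w) = Ssum F - 2%:R * rw F w.
Proof.
move=> wF.
rewrite /Ssum [in RHS](bigD1 w) //=.
have -> : \sum_(u in F :\ w) \sum_(v in F :\ w | u != v) c u v =
    \sum_(u in F | u != w) \sum_(v in F | (u != v) && (v != w)) c u v.
  apply: eq_big => [u|u _]; first by rewrite in_setD1 andbC.
  by apply: eq_bigl => v; rewrite in_setD1; case: (v == w); case: (v \in F); case: (u == v).
have -> : \sum_(u in F | u != w) \sum_(v in F | u != v) c u v =
    \sum_(u in F | u != w) (c u w + \sum_(v in F | (u != v) && (v != w)) c u v).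
  apply: eq_bigr => u /andP [uF uw].
  rewrite (bigD1 w) /=; last by rewrite wF.
  by congr (_ + _); apply: eq_bigl => v; rewrite andbA.
rewrite big_split /=.
have -> : \sum_(u in F | u != w) c u w = rw F w.
  by rewrite /rw; apply: eq_big => [v|v _]; [rewrite eq_sym | rewrite csym].
rewrite /rw; ring.
Qed.

Lemma exists_big (F : {set 'I_n}) : (0 < #|F|)%N -> exists2 w, w \in F & Ssum F <= #|F|%:R * rw F w.
Proof.
move=> F0.
case: (boolP [exists w in F, Ssum F <= #|F|%:R * rw F w]).
  by move=> /existsP [w /andP [wF h]]; exists w.
rewrite negb_exists => /forallP H; exfalso.
have lt : \sum_(w in F) #|F|%:R * rw F w < \sum_(w in F) Ssum F.
  apply: ltr_sum.
    by move: F0; rewrite card_gt0 => /set0Pn [x xF]; apply/hasP; exists x; rewrite ?mem_index_enum.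
  by move=> w wF; move: (H w); rewrite wF /= -ltNge.
move: lt; rewrite -mulr_sumr sumr_const -/(Ssum F) mulr_natl ltxx //.
Qed.

Lemma greedy j : (j <= n)%N -> exists F : {set 'I_n},
  #|F| = (n - j)%N /\ Ssum F * (n * n.-1)%:R <= Ssum [set: 'I_n]%SET * (#|F| * #|F|.-1)%:R.
Proof.
elim: j => [|j IH] hj.
  by exists [set: 'I_n]%SET; rewrite cardsT card_ord subn0; split.
have [F [cF hF]] := IH (ltnW hj).
have F0 : (0 < #|F|)%N by rewrite cF subn_gt0.
have [w wF hw] := @exists_big F F0.
have cD : #|F :\ w| = #|F|.-1 by rewrite [#|F|](cardsD1 w F) wF.
exists (F :\ w); split; first by rewrite cD cF subnS.
rewrite cD.
move: hF hw.
case E: #|F| F0 => [//|m] _; case: m E => [|k] E /=.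
  move=> _ _; rewrite muln0 mulr0.
  have e0 : #|F :\ w| = 0%N by rewrite cD E.
  by rewrite (cards0_eq e0) /Ssum big_set0 mul0r.
rewrite S_remove //.
set SF := Ssum F; set SV := Ssum [set: 'I_n]%SET; set r := rw F w; set Nn := (n * n.-1)%:R.
have Nn0 : 0 <= Nn by rewrite ler0n.
rewrite !natrM -!natr1.
set K := k%:R.
have K0 : 0 <= K by rewrite ler0n.
move=> h1 h2.
have h3 : (K + 1 + 1) * ((SF - 2%:R * r) * Nn) <= (K + 1 + 1) * (SV * ((K + 1) * K)).
  have h4 : (K + 1 + 1) * (SF - 2%:R * r) <= K * SF by nra.
  have h5 : K * (SF * Nn) <= K * (SV * ((K + 1 + 1) * (K + 1))) by apply: ler_wpM2l.
  nra.
have Kp : 0 < K + 1 + 1 by lra.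
rewrite ler_pM2l // in h3; lra.
Qed.

End Greedy.

End PartG.
Import PartG.

Module PartA.

Lemma arith_k (R : realFieldType) (n : nat) (L q : R) (kn : nat) :
  2 <= n%:R :> R -> q * q = n%:R -> 0 <= q -> 0 < L -> 1 - (n%:R)^-1 <= L ->
  kn%:R * L <= q -> (kn <= n)%N.
Proof.
move=> N2 qq q0 L0 Lb hk.
rewrite leqNgt; apply/negP => lt.
set N' : R := n%:R in N2 qq Lb *.
have N0 : 0 < N' by lra.
have hL : N' - 1 <= N' * L.
  have : N' * (1 - N'^-1) <= N' * L by rewrite ler_pM2l.
  by rewrite mulrBr mulr1 mulfV ?gt_eqF.
have k1 : N' + 1 <= kn%:R by rewrite /N' natr1 ler_nat.
have h1 : (N' + 1) * L <= q by nra.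
have h2 : (N' + 1) * (N' - 1) <= N' * q by nra.
have q75 : 7 / 5 <= q by nra.
have q3 : 343 / 125 <= q * q * q by nra.
nra.
Qed.

Lemma arith_S (R : realFieldType) (N' L q a SF SV : R) :
  2 <= N' -> q * q = N' -> 0 <= q -> 0 < L -> 0 <= a -> a <= N' ->
  0 <= a * (a - 1) -> a * L <= q ->
  SF * (N' * (N' - 1)) <= SV * (a * (a - 1)) -> SV <= 2 * N' * L ->
  SF <= 2 / L.
Proof.
move=> N2 qq q0 L0 a0 aN B0 aL hS hV.
have h1 : SF * (N' * (N' - 1)) <= 2 * N' * L * (a * (a - 1)) by nra.
have h2 : SF * (N' - 1) <= 2 * L * (a * (a - 1)).
  have : N' * (SF * (N' - 1)) <= N' * (2 * L * (a * (a - 1))) by nra.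
  by rewrite ler_pM2l //; lra.
have h3 : a * (a - 1) * N' <= a * a * (N' - 1) by nra.
have h4a : SF * (N' - 1) * N' <= 2 * L * (a * (a - 1)) * N'.
  by apply: ler_wpM2r => //; lra.
have h4b : 2 * L * (a * (a - 1) * N') <= 2 * L * (a * a * (N' - 1)).
  by apply: ler_wpM2l => //; lra.
have h4 : SF * (N' - 1) * N' <= 2 * L * (a * a) * (N' - 1) by lra.
have h5 : a * a * (L * L) <= N'.
  have : (a * L) * (a * L) <= q * q.
    apply: ler_pM => //; apply: mulr_ge0 => //; lra.
  by rewrite qq; lra.
have h6a : SF * (N' - 1) * N' * L <= 2 * L * (a * a) * (N' - 1) * L.
  by apply: ler_wpM2r => //; lra.
have h6b : a * a * (L * L) * (2 * (N' - 1)) <= N' * (2 * (N' - 1)).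
  by apply: ler_wpM2r => //; lra.
have h7 : SF * L <= 2.
  have : (N' * (N' - 1)) * (SF * L) <= (N' * (N' - 1)) * 2 by lra.
  by rewrite ler_pM2l //; apply: mulr_gt0; lra.
by rewrite ler_pdivlMr.
Qed.

End PartA.
Import PartA.

Module PartL.
Local Open Scope sesquilinear_scope.

Lemma char_poly_sim (F : comNzRingType) n (Q Q' M : 'M[F]_n) :
  Q *m Q' = 1%:M -> Q' *m Q = 1%:M -> char_poly (Q *m M *m Q') = char_poly M.
Proof.
move=> QQ' Q'Q; rewrite /char_poly.
set Qp := map_mx polyC Q; set Q'p := map_mx polyC Q'.
have QpQ' : Qp *m Q'p = 1%:M by rewrite -map_mxM QQ' map_mx1.
have Q'pQ : Q'p *m Qp = 1%:M by rewrite -map_mxM Q'Q map_mx1.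
have -> : char_poly_mx (Q *m M *m Q') = Qp *m char_poly_mx M *m Q'p.
  rewrite /char_poly_mx !map_mxM mulmxBr mulmxBl mul_mx_scalar -scalemxAl QpQ'.
  by rewrite scalemx1.
by rewrite !det_mulmx mulrAC -det_mulmx QpQ' det1 mul1r.

Qed.

Section Core.
Variable R : rcfType.
Local Notation C := R[i].
Local Notation rc := (real_complex R).
Lemma rc_real (x : R) : rc x \is Num.real.
Proof. by rewrite complex_real. Qed.
Lemma conj_rc (x : R) : (rc x)^* = rc x.
Proof. by rewrite conj_Creal // rc_real. Qed.

Lemma map_conj_rc m n (M : 'M[R]_(m,n)) : map_mx Num.conj (map_mx rc M) = map_mx rc M.
Proof. by apply/matrixP => i j; rewrite !mxE conj_rc. Qed.

Lemma trC_mul m n p (X : 'M[C]_(m,n)) (Y : 'M[C]_(n,p)) : (X *m Y)^t* = Y^t* *m X^t*.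
Proof. by rewrite trmx_mul map_mxM. Qed.

Lemma qf_diag n (y : 'rV[C]_n) (dv : 'rV[C]_n) :
  (y *m diag_mx dv *m y^t*) 0 0 = \sum_i dv 0 i * (y 0 i * (y 0 i)^*).
Proof.
rewrite mul_mx_diag !mxE; apply: eq_bigr => i _; rewrite !mxE.
by rewrite mulrCA mulrA.
Qed.

Lemma qf_id n (y : 'rV[C]_n) :
  (y *m y^t*) 0 0 = \sum_i (y 0 i * (y 0 i)^*).
Proof. by rewrite !mxE; apply: eq_bigr => i _; rewrite !mxE. Qed.

End Core.
Section CoreMain.
Variable R : rcfType.
Local Notation C := R[i].
Local Notation rc := (real_complex R).
Variables (N : nat) (A : 'M[R]_N) (s : seq R) (v0 : 'rV[R]_N).
Hypotheses (symA : A^T = A)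
  (hsort : sorted (fun x y : R => y <= x) s)
  (hchar : char_poly A = \prod_(a <- s) ('X - a%:P))
  (hv0 : v0 *m A = v0) (hv0n : v0 *m v0^T = 1%:M)
  (hpsd : forall z : 'rV[C]_N, 0 <= (z *m (1%:M - map_mx rc A) *m z^t*) 0 0)
  (hirr : forall z : 'rV[C]_N, z *m map_mx rc A = z ->
      z = (z *m (map_mx rc v0)^t*) 0 0 *: map_mx rc v0)
  (hN : (1 < N)%N).

Local Notation Ac := (map_mx rc A).
Local Notation v0c := (map_mx rc v0).

Lemma Ac_herm : Ac \is hermsymmx.
Proof.
apply/is_hermitianmxP; rewrite expr0 scale1r; apply/matrixP => i j.
rewrite !mxE conj_rc.
by have -> : A i j = A j i by rewrite -{1}symA mxE.
Qed.

Lemma core :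
  0 < 1 - s`_1 /\
  forall x : 'rV[R]_N, x *m v0^T = 0 ->
    (1 - s`_1) * (x *m x^T) 0 0 <= (x *m (1%:M - A) *m x^T) 0 0.
Proof.
have hn := @orthomx_spectralP _ _ Ac.
set U := spectralmx Ac in hn; set dv := spectral_diag Ac in hn.
have Uu : U \is unitarymx := spectral_unitarymx Ac.
have UU : U *m U^t* = 1%:M by apply/unitarymxP.
have UtU : U^t* *m U = 1%:M by rewrite -invmx_unitary // mulVmx // unitarymx_unit.
have eqA : Ac = U^t* *m diag_mx dv *m U.
  by rewrite -invmx_unitary //; apply/hn/hermitian_normalmx/Ac_herm.
pose d i := dv 0 i.
have dreal i : d i \is Num.real.
  by have /mxOverP := hermitian_spectral_diag_real Ac_herm; apply.
pose y (z : 'rV[C]_N) := z *m U^t*.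
have e1 z : z *m z^t* = y z *m (y z)^t*.
  by rewrite /y trC_mul trmxCK !mulmxA -(mulmxA z) UtU mulmx1.
have e2 z : z *m Ac *m z^t* = y z *m diag_mx dv *m (y z)^t*.
  by rewrite /y trC_mul trmxCK eqA !mulmxA.
have qfA z : (z *m (1%:M - Ac) *m z^t*) 0 0 =
    \sum_i (1 - d i) * ((y z) 0 i * ((y z) 0 i)^*).
  rewrite mulmxBr mulmx1 mulmxBl mxE e1 e2 qf_id [X in _ + X]mxE qf_diag -sumrB.
  by apply: eq_bigr => i _; rewrite mulrBl mul1r.

pose u i := row i U.
have eig i : u i *m Ac = d i *: u i.
  have : U *m Ac = diag_mx dv *m U by rewrite eqA !mulmxA UU mul1mx.
  move/(congr1 (row i)); rewrite row_mul => ->.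
  by rewrite mul_diag_mx; apply/rowP => j; rewrite !mxE.
have orth i j : (u i *m (u j)^t*) 0 0 = (i == j)%:R.
  have := congr1 (fun M : 'M[C]_N => M i j) UU; rewrite /= [RHS]mxE => <-.
  by rewrite !mxE; apply: eq_bigr => k _; rewrite !mxE.
have d_le1 i : d i <= 1.
  have := hpsd (u i); rewrite mulmxBr mulmx1 eig -{1}(scale1r (u i)).
  by rewrite -scalerBl -scalemxAl mxE orth eqxx mulr1 subr_ge0.
have nv : \sum_k (v0c 0 k * (v0c 0 k)^*) = 1.
  have := congr1 (fun M : 'M[R]_1 => rc (M 0 0)) hv0n; rewrite /= !mxE eqxx mulr1n rmorph_sum rmorph1.
  move=> <-; apply: eq_bigr => k _; rewrite !mxE conj_rc rmorphM.
  by [].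
have sc (a b : C) : ((a *: v0c) *m (b *: v0c)^t*) 0 0 = a * b^*.
  rewrite -[RHS]mulr1 -nv mulr_sumr !mxE; apply: eq_bigr => k _.
  rewrite !mxE rmorphM /=; ring.
pose cf i := (u i *m v0c^t*) 0 0.
have hu i : d i = 1 -> u i = cf i *: v0c.
  by move=> di; apply: hirr; rewrite eig di scale1r.
have v0cA : v0c *m Ac = v0c by rewrite -map_mxM hv0.
pose w := v0c *m U^t*.
have wd : w *m diag_mx dv = w.
  by rewrite /w -[in RHS]v0cA eqA !mulmxA -(mulmxA _ U) UU mulmx1.
have [i0 di0] : exists i0, d i0 = 1.
  have hw1 : \sum_i (w 0 i * (w 0 i)^*) = 1.
    by rewrite -qf_id -e1 qf_id nv.
  have [i wi] : exists i, w 0 i != 0.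
    apply/existsP; apply: contraT; rewrite negb_exists => /forallP H.
    move: hw1; rewrite big1 => [|i _]; last by rewrite (eqP (negbNE (H i))) mul0r.
    by move=> /eqP; rewrite eq_sym oner_eq0.
  exists i; have := congr1 (fun M : 'rV[C]_N => M 0 i) wd; rewrite /= mul_mx_diag mxE.
  by move/eqP; rewrite -{2}[w 0 i]mulr1 (inj_eq (mulfI wi)) => /eqP.
have uniq1 i : d i = 1 -> i = i0.
  move=> di; apply/eqP; apply: contraT => neq.
  have := orth i i0; rewrite (negbTE neq) (hu i di) (hu i0 di0) sc => h0.
  have := orth i i; rewrite eqxx (hu i di) sc => h1.
  have := orth i0 i0; rewrite eqxx (hu i0 di0) sc => h2.
  have : (cf i * (cf i0)^*) * (cf i0 * (cf i)^*) = 1.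
    by rewrite [cf i0 * _]mulrC mulrACA h1 mul1r mulrC h2.
  by rewrite h0 mul0r => /eqP; rewrite eq_sym oner_eq0.

have hcharC : \prod_(a <- map rc s) ('X - a%:P) = \prod_i ('X - (d i)%:P).
  have -> : \prod_i ('X - (d i)%:P) = char_poly Ac.
    rewrite eqA char_poly_sim // char_poly_trig ?diag_mx_is_trig //.
    by apply: eq_bigr => i _; rewrite mxE eqxx mulr1n.
  rewrite -map_char_poly hchar rmorph_prod big_map; apply: eq_bigr => a _.
  by rewrite /= map_polyXsubC.
have rootE x : (x \in map rc s) = [exists i, x == d i].
  rewrite -root_prod_XsubC hcharC /root horner_prod.
  apply/prodf_eq0/existsP.
    by case=> i _; rewrite hornerXsubC subr_eq0 => h; exists i.
  by case=> i h; exists i => //; rewrite hornerXsubC subr_eq0.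
have szs : size s = N.
  by have := size_char_poly A; rewrite hchar size_prod_XsubC => -[].
have geT : transitive (fun x y : R => y <= x).
  by move=> b a c hab hbc; exact: le_trans hbc hab.

have [a0 [a1 [rest Es]]] : exists a0 a1 rest, s = a0 :: a1 :: rest.
  have hN' := hN; move: szs; case: (s) => [|b0 [|b1 rest]] /= h; try by rewrite -h in hN'.
  by exists b0, b1, rest.
have hs' := hsort.
rewrite Es /= in hs' rootE hcharC *.
have /andP [a10 hrest] := hs'.
have all0 := order_path_min geT (hs' : path (fun x y : R => y <= x) a0 (a1 :: rest)).
have all1 := order_path_min geT hrest.
have in1 : rc 1 \in rc a0 :: rc a1 :: map rc rest.
  by rewrite rootE; apply/existsP; exists i0; rewrite di0 rmorph1.
have a0_1 : a0 = 1.
  apply/eqP; rewrite eq_le; apply/andP; split.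
    have : rc a0 \in rc a0 :: rc a1 :: map rc rest by rewrite mem_head.
    rewrite rootE => /existsP [j /eqP hj].
    by rewrite -lecR hj rmorph1; exact: d_le1.
  move: in1; rewrite -(map_cons rc) -(map_cons rc) (mem_map (@complexI R)).
  rewrite inE => /orP [/eqP -> //| h]; exact: (allP all0).
have dle i : i != i0 -> d i <= rc a1.
  move=> ni.
  have : d i \in rc a0 :: rc a1 :: map rc rest.
    by rewrite rootE; apply/existsP; exists i.
  rewrite -(map_cons rc) -(map_cons rc); case/mapP => a ain hda.
  have an1 : a != 1.
    apply: contraNneq ni => ha; apply/eqP; apply: uniq1.
    by rewrite hda ha rmorph1.
  rewrite hda lecR.
  move: ain; rewrite inE a0_1 (negbTE an1) /= inE => /orP [/eqP -> //| ar].
  exact: (allP all1).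
have a1lt : a1 < 1.
  have a1le : a1 <= 1 by rewrite -a0_1.
  rewrite lt_neqAle a1le andbT; apply/eqP => a1e.
  move: hcharC; rewrite !big_cons (bigD1 i0) //= di0 a1e a0_1 rmorph1.
  have nz : ('X - (1:C)%:P) != 0 by rewrite polyXsubC_eq0.
  move=> /(mulfI nz) /(congr1 (fun p => p.[1])) /=.
  rewrite hornerM hornerXsubC subrr mul0r horner_prod => /esym/eqP/prodf_eq0 [i ni].
  rewrite hornerXsubC subr_eq0 => /eqP hi.
  by move: ni; rewrite (uniq1 i (esym hi)) eqxx.
split; first by rewrite subr_gt0.
move=> x xv0.
pose z := map_mx rc x.
have zt : z^t* = map_mx rc x^T by rewrite /z map_trmx map_conj_rc.
have y0 : (y z) 0 i0 = 0.
  have hU k : U i0 k = cf i0 * rc (v0 0 k).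
    by have := congr1 (fun M : 'rV[C]_N => M 0 k) (hu i0 di0); rewrite /= !mxE.
  have := congr1 (fun M : 'M[R]_1 => rc (M 0 0)) xv0.
  rewrite /= !mxE rmorph0 rmorph_sum => h.
  transitivity ((cf i0)^* * \sum_i rc (x 0 i * v0^T i 0)); last by rewrite h mulr0.
  rewrite mulr_sumr; apply: eq_bigr => k _.
  rewrite !mxE hU rmorphM /= (@conj_rc R (v0 0 k)) rmorphM /=; ring.
have lhs : rc ((x *m (1%:M - A) *m x^T) 0 0) = (z *m (1%:M - Ac) *m z^t*) 0 0.
  have -> : rc ((x *m (1%:M - A) *m x^T) 0 0) = (map_mx rc (x *m (1%:M - A) *m x^T)) 0 0 by rewrite [RHS]mxE.
  by rewrite !map_mxM map_mxB map_mx1 zt.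
have nrm : rc ((x *m x^T) 0 0) = \sum_i ((y z) 0 i * ((y z) 0 i)^*).
  rewrite -qf_id -e1.
  have -> : rc ((x *m x^T) 0 0) = (map_mx rc (x *m x^T)) 0 0 by rewrite [RHS]mxE.
  by rewrite !map_mxM zt.
rewrite -lecR rmorphM /= lhs qfA nrm.
rewrite mulr_sumr; apply: ler_sum => i _.
have [->|ni] := eqVneq i i0; first by rewrite y0 mul0r !mulr0.
apply: ler_wpM2r; first exact: mul_conjC_ge0.
rewrite rmorphB rmorph1 lerD2l lerN2; exact: dle.
Qed.
End CoreMain.
Lemma dirichlet_id (K : comNzRingType) (I : finType) (w : I -> I -> K) (f h : I -> K) :
  (forall i j, w i j = w j i) ->
  \sum_i \sum_j w i j * ((f i - f j) * (h i - h j)) =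
  2%:R * (\sum_i \sum_j w i j * (f i * h i) - \sum_i \sum_j w i j * (f i * h j)).
Proof.
move=> ws.
have e1 : \sum_i \sum_j w i j * (f j * h j) = \sum_i \sum_j w i j * (f i * h i).
  by rewrite exchange_big; apply: eq_bigr => i _; apply: eq_bigr => j _; rewrite ws.
have e2 : \sum_i \sum_j w i j * (f j * h i) = \sum_i \sum_j w i j * (f i * h j).
  by rewrite exchange_big; apply: eq_bigr => i _; apply: eq_bigr => j _; rewrite ws.
transitivity (\sum_i \sum_j (w i j * (f i * h i) + w i j * (f j * h j)
     - w i j * (f i * h j) - w i j * (f j * h i))).
  by apply: eq_bigr => i _; apply: eq_bigr => j _; ring.
under eq_bigr do rewrite sumrB sumrB big_split /=.
by rewrite sumrB sumrB big_split /= e1 e2; ring.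
Qed.

Section Markov.
Variables (R : realType) (n : nat) (E : rel 'I_n) (J : 'I_n -> 'I_n -> R).
Local Notation T := (spins n).
Local Notation mu := (ising_mu E J).
Local Notation P := (glauber E J).
Definition cnd (v : 'I_n) (s t : T) := [forall w, (w != v) ==> (s w == t w)].
Arguments cnd : simpl never.
Definition Zv (s : T) (v : 'I_n) := mu (upd s v true) + mu (upd s v false).

Lemma weight_gt0 s : 0 < ising_weight E J s. Proof. exact: expR_gt0. Qed.
Lemma Z_gt0 : 0 < ising_Z E J.
Proof.
rewrite /ising_Z (bigD1 ([ffun => true] : T)) //=.
apply: (lt_le_trans (weight_gt0 ([ffun => true] : T))); rewrite lerDl.
by apply: sumr_ge0 => i _; exact/ltW/weight_gt0.
Qed.
Lemma mu_gt0 s : 0 < mu s.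
Proof. by rewrite /ising_mu divr_gt0 ?weight_gt0 ?Z_gt0. Qed.
Lemma sum_mu : \sum_s mu s = 1.
Proof. by rewrite /ising_mu -mulr_suml divff // gt_eqF // Z_gt0. Qed.
Lemma Zv_gt0 s v : 0 < Zv s v.
Proof. by rewrite /Zv addr_gt0 ?mu_gt0. Qed.

Lemma cndE v s t : cnd v s t = (t == upd s v (t v)).
Proof.
rewrite /cnd; apply/forallP/eqP => [H|->].
  apply/ffunP => w; rewrite ffunE; case: eqP => [->//|/eqP ne].
  by move: (H w); rewrite ne /= => /eqP.
by move=> w; apply/implyP => ne; rewrite ffunE (negbTE ne).
Qed.
Lemma cnd_sym v s t : cnd v s t = cnd v t s.
Proof. by rewrite /cnd; apply: eq_forallb => w; rewrite [s w == _]eq_sym. Qed.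
Lemma cnd_upd v s t b : cnd v s t -> upd s v b = upd t v b.
Proof.
rewrite /cnd => /forallP H; apply/ffunP => w; rewrite !ffunE; case: eqP => // /eqP ne.
exact/eqP/(implyP (H w) ne).
Qed.
Lemma cnd_self v s b : cnd v s (upd s v b).
Proof. by rewrite cndE ffunE eqxx. Qed.

Lemma sum_cnd v s (g : T -> R) :
  \sum_t (if cnd v s t then g t else 0) = g (upd s v true) + g (upd s v false).
Proof.
have ne : upd s v true != upd s v false.
  by apply/eqP => /ffunP/(_ v); rewrite !ffunE eqxx.
have ne' : upd s v false != upd s v true by rewrite eq_sym.
rewrite (bigD1 (upd s v true)) //= cnd_self (bigD1 (upd s v false)) //= cnd_self.
rewrite big1 ?addr0 //.
move=> t /andP [nt nf]; case: ifP => // /[dup] _; rewrite cndE => /eqP ht.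
move: ht; case: (t v) => ht; [by rewrite ht eqxx in nt | by rewrite ht eqxx in nf].
Qed.

Lemma PE s t : P s t = n%:R^-1 * \sum_v (if cnd v s t then mu t / Zv s v else 0).
Proof. by []. Qed.

Lemma P_row s : (0 < n)%N -> \sum_t P s t = 1.
Proof.
move=> n0; under eq_bigr do rewrite PE.
rewrite -mulr_sumr exchange_big /=.
under eq_bigr => v _ do rewrite (sum_cnd v s (fun t => mu t / Zv s v)) -mulrDl divff ?gt_eqF ?Zv_gt0 //.
by rewrite sumr_const card_ord mulVf // pnatr_eq0 -lt0n.
Qed.

Lemma P_db s t : mu s * P s t = mu t * P t s.
Proof.
rewrite !PE !(mulrCA (mu _)); congr (_ * _); rewrite !mulr_sumr.
apply: eq_bigr => v _; rewrite cnd_sym; case: ifP => [c|_]; last by rewrite !mulr0.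
rewrite /Zv (cnd_upd v t s true c) (cnd_upd v t s false c); by rewrite mulrCA.
Qed.

Lemma P_ge0 s t : 0 <= P s t.
Proof.
rewrite PE mulr_ge0 ?invr_ge0 ?ler0n //; apply: sumr_ge0 => v _.
case: ifP => // _; apply: divr_ge0; [exact/ltW/mu_gt0 | exact/ltW/Zv_gt0].
Qed.

Lemma P_pos s v b : (0 < n)%N -> 0 < P s (upd s v b).
Proof.
move=> n0; rewrite PE mulr_gt0 ?invr_gt0 ?ltr0n //.
rewrite (bigD1 v) //= cnd_self.
apply: (@lt_le_trans _ _ (mu (upd s v b) / Zv s v)); first by rewrite divr_gt0 ?mu_gt0 ?Zv_gt0.
rewrite lerDl; apply: sumr_ge0 => w _; case: ifP => // _.
apply: divr_ge0; [exact/ltW/mu_gt0 | exact/ltW/Zv_gt0].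
Qed.

Lemma hyper_const (X : Type) (g : T -> X) :
  (forall s v b, g (upd s v b) = g s) -> forall s, g s = g [ffun => true].
Proof.
move=> hg s.
pose sk k := [ffun w : 'I_n => if (w < k)%N then true else s w] : T.
have e0 : sk 0%N = s by apply/ffunP => w; rewrite ffunE.
have en : sk n = [ffun => true] by apply/ffunP => w; rewrite !ffunE ltn_ord.
have step k : g (sk k) = g (sk k.+1).
  case: (ltnP k n) => hk.
    have -> : sk k.+1 = upd (sk k) (Ordinal hk) true.
      apply/ffunP => w; rewrite !ffunE ltnS.
      have [->|ne] := eqVneq w (Ordinal hk); first by rewrite /= leqnn.
      have ne' : (nat_of_ord w != k) by apply: contra ne => /eqP e; apply/eqP/val_inj.
      by rewrite leq_eqVlt (negbTE ne').
    by rewrite hg.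
  have -> : sk k.+1 = sk k.
    apply/ffunP => w; rewrite !ffunE.
    by rewrite (leq_trans (ltn_ord w) hk) (leq_trans (ltn_ord w) (leqW hk)).
  by [].
have : forall k, g s = g (sk k).
  by elim=> [|k IH]; [rewrite e0 | rewrite IH step].
by move=> /(_ n); rewrite en.
Qed.

End Markov.

End PartL.
Import PartL.

Module PartM.
Local Open Scope sesquilinear_scope.

Section Mat.
Variables (R : realType) (n : nat) (E : rel 'I_n) (J : 'I_n -> 'I_n -> R).
Local Notation T := (spins n).
Local Notation mu := (ising_mu E J).
Local Notation P := (glauber E J).
Local Notation N := #|{: T}|.

Lemma sum_ev (F : T -> R) : \sum_(i < N) F (enum_val i) = \sum_t F t.
Proof. by rewrite -big_enum_val. Qed.

Definition msq (i : 'I_N) := Num.sqrt (mu (enum_val i)).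
Lemma msq_gt0 i : 0 < msq i. Proof. by rewrite sqrtr_gt0 mu_gt0. Qed.
Lemma msq2 i : msq i * msq i = mu (enum_val i).
Proof. by rewrite -expr2 sqr_sqrtr // ltW // mu_gt0. Qed.

Definition Amx : 'M[R]_N := \matrix_(i, j) (msq i * P (enum_val i) (enum_val j) / msq j).
Definition v0 : 'rV[R]_N := \row_i msq i.

Lemma Amx_sym : Amx^T = Amx.
Proof.
apply/matrixP => i j; rewrite !mxE.
have Hi : msq i != 0 by rewrite gt_eqF ?msq_gt0.
have Hj : msq j != 0 by rewrite gt_eqF ?msq_gt0.
have db := @P_db R n E J (enum_val i) (enum_val j).
rewrite -msq2 -msq2 in db.
transitivity (msq j * msq j * P (enum_val j) (enum_val i) / (msq i * msq j)).
  by field; rewrite Hi Hj.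
by rewrite -db; field; rewrite Hi Hj.
Qed.

Lemma Amx_char : char_poly Amx = char_poly (glauber_mx E J).
Proof.
pose D := diag_mx (\row_i msq i); pose D' := diag_mx (\row_i (msq i)^-1).
have -> : Amx = D *m glauber_mx E J *m D'.
  by apply/matrixP => i j; rewrite mul_mx_diag mul_diag_mx !mxE.
apply: char_poly_sim.
  apply/matrixP => i j; rewrite mul_diag_mx !mxE.
  case: eqP => [->|_]; last by rewrite mulr0n mulr0.
  by rewrite !mulr1n divff // gt_eqF ?msq_gt0.
apply/matrixP => i j; rewrite mul_diag_mx !mxE.
case: eqP => [->|_]; last by rewrite mulr0n mulr0.
by rewrite !mulr1n mulVf // gt_eqF ?msq_gt0.
Qed.

Lemma v0A : (0 < n)%N -> v0 *m Amx = v0.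
Proof.
move=> n0; apply/rowP => j; rewrite !mxE.
have Hj : msq j != 0 by rewrite gt_eqF ?msq_gt0.
transitivity (\sum_(i < N) mu (enum_val i) * P (enum_val i) (enum_val j) / msq j).
  by apply: eq_bigr => i _; rewrite !mxE -msq2 !mulrA.
rewrite -mulr_suml.
under eq_bigr do rewrite P_db.
rewrite -mulr_sumr (sum_ev (fun t => P (enum_val j) t)) P_row // mulr1 -msq2 mulfK //.
Qed.

Lemma v0n : v0 *m v0^T = 1%:M.
Proof.
apply/matrixP => i j; rewrite !ord1 !mxE /=.
transitivity (\sum_(k < N) mu (enum_val k)); first by apply: eq_bigr => k _; rewrite !mxE msq2.
by rewrite (sum_ev mu) sum_mu.
Qed.

Lemma quad_dir (K : comNzRingType) (phi : {rmorphism R -> K}) (z z' : 'rV[K]_N) :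
  (0 < n)%N ->
  2%:R * (z *m (1%:M - map_mx phi Amx) *m z'^T) 0 0 =
  \sum_i \sum_j phi (mu (enum_val i) * P (enum_val i) (enum_val j)) *
     ((z 0 i * phi (msq i)^-1 - z 0 j * phi (msq j)^-1) *
      (z' 0 i * phi (msq i)^-1 - z' 0 j * phi (msq j)^-1)).
Proof.
move=> n0.
pose f i := z 0 i * phi (msq i)^-1; pose h i := z' 0 i * phi (msq i)^-1.
rewrite (@dirichlet_id _ _ _ f h); last by move=> i j; rewrite P_db.
congr (_ * _).
have nz i : msq i != 0 by rewrite gt_eqF ?msq_gt0.
have zf i : z 0 i = phi (msq i) * f i.
  by rewrite /f mulrCA -rmorphM divff ?rmorph1 ?mulr1.
have zh i : z' 0 i = phi (msq i) * h i.
  by rewrite /h mulrCA -rmorphM divff ?rmorph1 ?mulr1.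
have -> : (z *m (1%:M - map_mx phi Amx) *m z'^T) 0 0 =
   (z *m z'^T) 0 0 - (z *m map_mx phi Amx *m z'^T) 0 0.
  by rewrite mulmxBr mulmx1 mulmxBl mxE [X in _ + X]mxE.
congr (_ - _).
  rewrite mxE; apply: eq_bigr => i _.
  rewrite -mulr_suml -rmorph_sum -mulr_sumr.
  rewrite (sum_ev (fun t => P (enum_val i) t)) P_row // mulr1 mxE zf zh -msq2 rmorphM.
  ring.
rewrite mxE; under eq_bigr => j _ do rewrite mxE mulr_suml.
rewrite exchange_big /=; apply: eq_bigr => i _; apply: eq_bigr => j _.
rewrite !mxE zf zh.
have key : msq i * (msq i * P (enum_val i) (enum_val j) / msq j) * msq j =
    mu (enum_val i) * P (enum_val i) (enum_val j).
  by rewrite -msq2; field; rewrite nz.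
rewrite -key !rmorphM; ring.
Qed.

Local Notation C := R[i].
Local Notation rc := (real_complex R).

Lemma quadC (z : 'rV[C]_N) : (0 < n)%N ->
  2%:R * (z *m (1%:M - map_mx rc Amx) *m z^t*) 0 0 =
  \sum_i \sum_j rc (mu (enum_val i) * P (enum_val i) (enum_val j)) *
     ((z 0 i * rc (msq i)^-1 - z 0 j * rc (msq j)^-1) *
      (z 0 i * rc (msq i)^-1 - z 0 j * rc (msq j)^-1)^*).
Proof.
move=> n0; rewrite -map_trmx quad_dir //; apply: eq_bigr => i _; apply: eq_bigr => j _.
by rewrite !mxE rmorphB !rmorphM /= !conj_rc.
Qed.

Lemma psdC (z : 'rV[C]_N) : (0 < n)%N -> 0 <= (z *m (1%:M - map_mx rc Amx) *m z^t*) 0 0.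
Proof.
move=> n0; rewrite -(pmulr_rge0 _ (ltr0n _ 2)) quadC //.
apply: sumr_ge0 => i _; apply: sumr_ge0 => j _; apply: mulr_ge0; last exact: mul_conjC_ge0.
by rewrite ler0c mulr_ge0 ?P_ge0 // ltW // mu_gt0.
Qed.

Lemma irrC (z : 'rV[C]_N) : (0 < n)%N -> z *m map_mx rc Amx = z ->
  z = (z *m (map_mx rc v0)^t*) 0 0 *: map_mx rc v0.
Proof.
move=> n0 hz.
pose f i := z 0 i * rc (msq i)^-1.
have q0 : (z *m (1%:M - map_mx rc Amx) *m z^t*) 0 0 = 0.
  by rewrite mulmxBr mulmx1 hz subrr mul0mx mxE.
have nn i j : 0 <= rc (mu (enum_val i) * P (enum_val i) (enum_val j)) *
     ((f i - f j) * (f i - f j)^*).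
  apply: mulr_ge0; last exact: mul_conjC_ge0.
  by rewrite ler0c mulr_ge0 ?P_ge0 // ltW // mu_gt0.
have s0 := quadC z n0; rewrite q0 mulr0 in s0.
have ge i : true -> 0 <= \sum_j rc (mu (enum_val i) * P (enum_val i) (enum_val j)) *
     ((f i - f j) * (f i - f j)^*) by move=> _; apply: sumr_ge0 => j _; exact: nn.
have H1 := psumr_eq0P ge (esym s0).
have Hi i j : rc (mu (enum_val i) * P (enum_val i) (enum_val j)) *
     ((f i - f j) * (f i - f j)^*) = 0.
  by apply: (psumr_eq0P _ (H1 i isT)) => // j' _; exact: nn.
have feq i v b : f i = f (enum_rank (upd (enum_val i) v b)).
  have := Hi i (enum_rank (upd (enum_val i) v b)); move/eqP; rewrite mulf_eq0 => /orP [].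
    rewrite fmorph_eq0 enum_rankK mulf_eq0 => /orP [] /eqP h.
      by have := @mu_gt0 R n E J (enum_val i); rewrite h ltxx.
    by have := @P_pos R n E J (enum_val i) v b n0; rewrite h ltxx.
  by rewrite mul_conjC_eq0 subr_eq0 => /eqP.
pose g t := f (enum_rank t).
have gc := @hyper_const n _ g.
have gu s v b : g (upd s v b) = g s.
  by rewrite /g [in RHS](feq (enum_rank s) v b) enum_rankK.
pose c := g [ffun => true].
have fc i : f i = c by rewrite /c -(gc gu (enum_val i)) /g enum_valK.
have zc i : z 0 i = c * rc (msq i).
  rewrite -(fc i) /f -mulrA -rmorphM mulVf ?rmorph1 ?mulr1 //.
  by rewrite gt_eqF ?msq_gt0.
have cz : (z *m (map_mx rc v0)^t*) 0 0 = c.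
  rewrite mxE; transitivity (c * rc (\sum_(i < N) mu (enum_val i))).
    rewrite rmorph_sum mulr_sumr; apply: eq_bigr => i _.
    by rewrite !mxE zc conj_rc -msq2 rmorphM mulrA.
  by rewrite (sum_ev mu) sum_mu rmorph1 mulr1.
by rewrite cz; apply/rowP => i; rewrite !mxE zc.
Qed.

Lemma cardN : (0 < n)%N -> (1 < N)%N.
Proof.
move=> n0; rewrite card_ffun card_bool card_ord.
case: n n0 => // k _; rewrite expnS; have := expn_gt0 2 k.
by case: (2 ^ k)%N => // m _; rewrite mul2n -addnn addSn ltnS addnS.
Qed.

Lemma poincare (sp : seq R) (g : T -> R) : (0 < n)%N ->
  is_spectrum (glauber_mx E J) sp ->
  0 < 1 - sp`_1 /\
  (1 - sp`_1) * (\sum_t mu t * (g t - ising_E E J g) ^+ 2) * 2%:R <=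
    \sum_s \sum_t mu s * P s t * (g s - g t) ^+ 2.
Proof.
move=> n0 [hsort hchar].
have hch : char_poly Amx = \prod_(a <- sp) ('X - a%:P) by rewrite Amx_char.
have [gap0 hp] := @core R N Amx sp v0 Amx_sym hsort hch (v0A n0) v0n
  (fun z => psdC z n0) (fun z => irrC z n0) (cardN n0).
split=> //.
pose m := ising_E E J g.
pose x : 'rV[R]_N := \row_i (msq i * (g (enum_val i) - m)).
have xv : x *m v0^T = 0.
  apply/rowP => i; rewrite ord1 !mxE.
  transitivity (\sum_(k < N) (mu (enum_val k) * g (enum_val k) - m * mu (enum_val k))).
    by apply: eq_bigr => k _; rewrite !mxE -msq2; ring.
  rewrite sumrB (sum_ev (fun t => mu t * g t)) -mulr_sumr (sum_ev mu) sum_mu mulr1.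
  by rewrite subrr.
have xx : (x *m x^T) 0 0 = \sum_t mu t * (g t - m) ^+ 2.
  rewrite mxE -(sum_ev (fun t => mu t * (g t - m) ^+ 2)); apply: eq_bigr => k _.
  by rewrite !mxE -msq2; ring.
have qq := @quad_dir _ (idfun : {rmorphism R -> R}) x x n0.
rewrite map_mx_id // in qq.
have := hp x xv; rewrite xx => h.
apply: (le_trans (ler_wpM2r (ler0n _ 2) h)).
rewrite mulrC qq -(sum_ev (fun s => \sum_t mu s * P s t * (g s - g t) ^+ 2)).
rewrite le_eqVlt; apply/orP; left; apply/eqP.
apply: eq_bigr => i _; rewrite -(sum_ev (fun t => mu (enum_val i) * P (enum_val i) t * (g (enum_val i) - g t) ^+ 2)).
apply: eq_bigr => j _; rewrite !mxE /=.
have nzi : msq i != 0 by rewrite gt_eqF ?msq_gt0.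
have nzj : msq j != 0 by rewrite gt_eqF ?msq_gt0.
rewrite (mulrC (msq i)) (mulrC (msq j)) !mulfK //; ring.
Qed.

End Mat.

End PartM.
Import PartM.

Module PartC.

Section Cov.
Variables (R : realType) (n : nat) (E : rel 'I_n) (J : 'I_n -> 'I_n -> R).
Local Notation T := (spins n).
Local Notation mu := (ising_mu E J).
Local Notation P := (glauber E J).
Local Notation EE := (ising_E E J).

Definition fsum (s : T) : R := \sum_v spin (s v).

Lemma fsum_diff v s t : @cnd n v s t -> fsum s - fsum t = spin (s v) - spin (t v).
Proof.
rewrite /cnd => /forallP H; rewrite /fsum (bigD1 v) //= [X in _ - X](bigD1 v) //=.
suff -> : \sum_(i | i != v) spin (s i) = \sum_(i | i != v) spin (t i) :> R by ring.
by apply: eq_bigr => w wv; rewrite (eqP (implyP (H w) wv)).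
Qed.

Lemma spin_diff (a b : bool) : (spin a - spin b) ^+ 2 <= 4 :> R.
Proof. by case: a; case: b; rewrite /spin /= expr2; lra. Qed.

Lemma dir_term s t : P s t * (fsum s - fsum t) ^+ 2 <= 4 * P s t.
Proof.
rewrite PE -mulrA [X in _ <= X]mulrCA; apply: ler_wpM2l; first by rewrite invr_ge0 ler0n.
rewrite mulr_suml mulr_sumr; apply: ler_sum => v _.
case: ifP => c; last by rewrite !mul0r mulr0.
rewrite mulrC; apply: ler_wpM2r; last by rewrite (fsum_diff _ _ _ c); exact: spin_diff.
by apply: divr_ge0; [exact/ltW/mu_gt0 | exact/ltW/Zv_gt0].
Qed.

Lemma dir_le4 : (0 < n)%N ->
  \sum_s \sum_t mu s * P s t * (fsum s - fsum t) ^+ 2 <= 4.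
Proof.
move=> n0.
apply: (@le_trans _ _ (\sum_s \sum_t mu s * (4 * P s t))).
  apply: ler_sum => s _; apply: ler_sum => t _; rewrite -mulrA.
  by apply: ler_wpM2l; [exact/ltW/mu_gt0 | exact: dir_term].
rewrite le_eqVlt; apply/orP; left; apply/eqP.
transitivity (4 * \sum_s mu s); last by rewrite sum_mu mulr1.
rewrite mulr_sumr; apply: eq_bigr => s _.
by rewrite -mulr_sumr -mulr_sumr P_row // mulr1 mulrC.
Qed.

Lemma var_E (g : T -> R) :
  \sum_t mu t * (g t - EE g) ^+ 2 = EE (fun t => g t * g t) - EE g * EE g.
Proof.
rewrite /ising_E.
set m := \sum_t mu t * g t.
transitivity (\sum_t (mu t * (g t * g t) - 2%:R * m * (mu t * g t) + m * m * mu t)).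
  by apply: eq_bigr => t _; ring.
rewrite big_split sumrB /= -!mulr_sumr -/m sum_mu; ring.
Qed.

Lemma covE u v : ising_cov E J u v =
  EE (fun s => spin (s u) * spin (s v)) - EE (fun s => spin (s u)) * EE (fun s => spin (s v)).
Proof. by []. Qed.

Lemma cov_sum :
  \sum_u \sum_v ising_cov E J u v = \sum_t mu t * (fsum t - EE fsum) ^+ 2.
Proof.
have Ef : EE fsum = \sum_u EE (fun s => spin (s u)).
  rewrite /ising_E /fsum; under eq_bigr do rewrite mulr_sumr.
  by rewrite exchange_big.
have Eff : EE (fun t => fsum t * fsum t) =
    \sum_u \sum_v EE (fun s => spin (s u) * spin (s v)).
  rewrite /ising_E /fsum.
  transitivity (\sum_t \sum_u \sum_v mu t * (spin (t u) * spin (t v))).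
    apply: eq_bigr => t _; rewrite mulr_suml mulr_sumr; apply: eq_bigr => u _.
    by rewrite mulr_sumr mulr_sumr; apply: eq_bigr => v _; ring.
  rewrite exchange_big; apply: eq_bigr => u _; by rewrite exchange_big.
rewrite var_E Ef Eff mulr_suml -sumrB; apply: eq_bigr => u _.
by rewrite mulr_sumr -sumrB; apply: eq_bigr => v _; rewrite covE.
Qed.

Lemma cov_diag_ge0 u : 0 <= ising_cov E J u u.
Proof.
rewrite covE -var_E; apply: sumr_ge0 => t _.
by rewrite mulr_ge0 ?sqr_ge0 // ltW // mu_gt0.
Qed.

End Cov.

End PartC.
Import PartC.
Theorem lemma2p2 (R : realType) (n : nat) (E : rel 'I_n) (J : 'I_n -> 'I_n -> R)
  (E_sym : symmetric E) (E_irr : irreflexive E)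
  (J_nonneg : forall u v, E u v -> 0 <= J u v)
  (s : seq R) (hs : is_spectrum (glauber_mx E J) s)
  (hgap : (gap_of s)^-1 <= n%:R * ln (n%:R : R)) :
  exists F : {set 'I_n},
    (#|F| : int) = Num.floor (Num.sqrt (n%:R : R) / ln (n%:R : R)) /\
    \sum_(u in F) \sum_(v in F | u != v) ising_cov E J u v <= 2 / ln (n%:R : R).
Proof.
case: (leqP n 1) => hn.
  have L0 : ln (n%:R : R) = 0.
    move: hn; rewrite leq_eqVlt ltnS leqn0 => /orP [/eqP -> | /eqP ->].
      exact: ln1.
    by rewrite ln0.
  exists (@finset.set0 _); rewrite L0 invr0 !mulr0 floor0 cards0 big_set0; split => //.
have n0 : (0 < n)%N by apply: ltnW.
set L := ln (n%:R : R).
have N2 : 2 <= n%:R :> R by rewrite ler_nat.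
have L0 : 0 < L by apply: ln_gt0; rewrite ltr1n.
have Npos : 0 < n%:R :> R by rewrite ltr0n.
have Lb : 1 - (n%:R)^-1 <= L.
  have := @le_ln1Dx R ((n%:R)^-1 - 1).
  rewrite [1 + _]addrC subrK lnV ?posrE // => h.
  have ni : 0 < (n%:R : R)^-1 by rewrite invr_gt0.
  have : -L <= (n%:R)^-1 - 1 by apply: h; lra.
  lra.
set q := Num.sqrt (n%:R : R).
have q0 : 0 <= q by apply: sqrtr_ge0.
have qq : q * q = n%:R by rewrite -expr2 sqr_sqrtr // ler0n.
have fx0 : 0 <= Num.floor (q / L) by rewrite floor_ge0 divr_ge0 // ltW.
have [kn hk] : exists kn : nat, Num.floor (q / L) = kn%:Z.
  by move: fx0; case: (Num.floor (q / L)) => [m _|m //]; exists m.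
have kle : kn%:R <= q / L by have := floor_le (q / L); rewrite hk.
have kL : kn%:R * L <= q by rewrite -ler_pdivlMr.
have kn_le : (kn <= n)%N.
  exact: (@arith_k R n L q kn N2 qq q0 L0 Lb kL).
have [gap0 hp] := @poincare R n E J s (fsum R n) n0 hs.
have hd := @dir_le4 R n E J n0.
rewrite -cov_sum in hp.
set V := \sum_u \sum_v ising_cov E J u v in hp.
have hV : V <= 2%:R * n%:R * L.
  have h1 : (1 - s`_1) * V <= 2 by lra.
  have h2 : V <= 2 * (1 - s`_1)^-1.
    by rewrite mulrC -ler_pdivlMr // in h1; rewrite mulrC.
  apply: (le_trans h2); rewrite -mulrA; apply: ler_wpM2l => //.
have csym u v : ising_cov E J u v = ising_cov E J v u.
  rewrite /ising_cov mulrC; congr (_ - _); rewrite /ising_E.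
  by apply: eq_bigr => t _; rewrite [spin (t u) * _]mulrC.
have hSV : Ssum R n (ising_cov E J) [set: 'I_n]%SET <= V.
  have -> : Ssum R n (ising_cov E J) [set: 'I_n]%SET =
      \sum_u \sum_(v | u != v) ising_cov E J u v.
    by apply: eq_big => [u|u _]; [rewrite finset.in_setT | apply: eq_bigl => v; rewrite finset.in_setT].
  rewrite /V; apply: ler_sum => u _.
  rewrite [X in _ <= X](bigD1 u) //= -[X in X <= _]add0r; apply: lerD.
    exact: (@cov_diag_ge0 R n E J u).
  by rewrite le_eqVlt; apply/orP; left; apply/eqP; apply: eq_bigl => v; rewrite eq_sym.
have castm (m : nat) : (m * m.-1)%:R = m%:R * (m%:R - 1) :> R.
  case: m => [|m]; first by rewrite mul0n mul0r.
  by rewrite natrM -natr1 addrK.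
have [F [cF hF]] := @greedy R n (ising_cov E J) csym (n - kn) (leq_subr _ _).
rewrite subKn // in cF.
exists F; rewrite cF -hk; split => //.
rewrite cF !castm in hF.
have := @arith_S R n%:R L q kn%:R (Ssum R n (ising_cov E J) F)
  (Ssum R n (ising_cov E J) [set: 'I_n]%SET) N2 qq q0 L0 (ler0n _ _) _ _ kL hF (le_trans hSV hV).
by rewrite ler_nat kn_le -castm ler0n; apply.
Qed.
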